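(* Let $G$ be a graph and $k \ge 0$ an integer. Then $G$ has a 2-coloring of cost at most $k$ if and only if there exists a set $S \subseteq E(G)$ of at most $k$ edges such that $G/S$ is bipartite.
   Context: All graphs are finite, simple and undirected. A 2-coloring of $G$ is any function $\phi: V(G)\to\{1,2\}$ (not necessarily proper). A monochromatic component of $\phi$ is a vertex set $X$ such that $G[X]$ is a connected component of $G[\phi^{-1}(1)]$ or of $G[\phi^{-1}(2)]$. The cost of $\phi$ is $\sum_{X} (|X|-1)$, the sum over all monochromatic components $X$ of $\phi$. Contracting an edge $xy$ deletes $x$ and $y$ and replaces them by a new vertex adjacent to exactly the vertices adjacent to at least one of $x,y$. For $S\subseteq E(G)$, $G/S$ is the graph obtained by repeatedly contracting an edge of $S$ until none remains; equivalently, by contracting all edges of a spanning forest of $(V(G),S)$. *)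

(* Defs.v *)
(* A finite simple graph is a symmetric irreflexive
   relation e : rel T on a finType T. *)
From mathcomp Require Import all_boot.
Set Implicit Arguments. Unset Strict Implicit. Unset Printing Implicit Defensive.

Definition edges (T : finType) (e : rel T) : {set {set T}} :=
  [set [set x; y] | x in T, y in T & e x y].

Definition induced (T : finType) (e : rel T) (P : pred T) : rel T :=
  fun x y => [&& P x, P y & e x y].

Definition color_comps (T : finType) (e : rel T) (phi : T -> bool) (c : bool)
  : {set {set T}} :=
  [set [set y | connect (induced e (fun v => phi v == c)) x y]
     | x in [set x | phi x == c]].

Definition mono_comps (T : finType) (e : rel T) (phi : T -> bool) : {set {set T}} :=
  color_comps e phi true :|: color_comps e phi false.

Definition cost (T : finType) (e : rel T) (phi : T -> bool) : nat :=
  \sum_(X in mono_comps e phi) (#|X| - 1).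

(* Contraction G/S for S a set of edges: vertices are the connected components
   of the spanning subgraph (V(G), S); two distinct such classes are adjacent
   iff some edge of G joins them. *)
Definition srel (T : finType) (S : {set {set T}}) : rel T :=
  fun x y => [set x; y] \in S.

Definition contract_V (T : finType) (S : {set {set T}}) : {set {set T}} :=
  [set [set y | connect (srel S) x y] | x : T].

Definition contract_adj (T : finType) (e : rel T) : rel {set T} :=
  fun A B => (A != B) && [exists x in A, exists y in B, e x y].

Definition bipartite (U : finType) (r : rel U) (V : {set U}) : Prop :=
  exists f : U -> bool, forall A B, A \in V -> B \in V -> r A B -> f A != f B.

(* Main.v *)
Require Import Defs.
From mathcomp Require Import all_boot zify.
Set Implicit Arguments. Unset Strict Implicit. Unset Printing Implicit Defensive.

Section Gen.
Variable T : finType.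

Lemma connect_ind' (r : rel T) (P : T -> Prop) x :
  P x -> (forall y z, P y -> r y z -> P z) -> forall y, connect r x y -> P y.
Proof.
move=> Px step y /connectP [p pth ->]; elim: p x Px pth => [|z p IH] x Px //=.
by case/andP=> rxz pth; apply: IH pth; apply: step rxz.
Qed.

Lemma card_img_le (X Y : finType) (D : {pred T}) (f : T -> X) (h : T -> Y) :
  {in D &, forall x y, h x = h y -> f x = f y} -> #|f @: D| <= #|h @: D|.
Proof.
move=> H.
pose g c := omap f [pick x in D | h x == c].
have sub : Some @: (f @: D) \subset g @: (h @: D).
  apply/subsetP=> o /imsetP [c /imsetP [x xD ->] ->].
  apply/imsetP; exists (h x); first by apply/imsetP; exists x.
  rewrite /g; case: pickP => [x' /andP [x'D /eqP hx]|/(_ x)]; last by rewrite xD eqxx.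
  by rewrite /= (H _ _ x'D xD hx).
rewrite -(card_imset _ (@Some_inj _)).
exact: leq_trans (subset_leq_card sub) (leq_imset_card _ _).
Qed.

Lemma card_img_lt (X Y : finType) (f : T -> X) (h : T -> Y) x0 y0 :
  (forall x y, h x = h y -> f x = f y) -> f x0 = f y0 -> h x0 != h y0 ->
  #|f @: T| < #|h @: T|.
Proof.
move=> H fxy hxy.
pose D' := [set z | h z != h y0].
have s1 : f @: T \subset f @: D'.
  apply/subsetP=> c /imsetP [z _ ->]; apply/imsetP.
  case: (eqVneq (h z) (h y0)) => hz.
    by exists x0; rewrite ?inE // fxy (H _ _ hz).
  by exists z; rewrite ?inE.
have s2 : h @: D' \subset (h @: T) :\ h y0.
  apply/subsetP=> c /imsetP [z]; rewrite inE => hz ->.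
  by rewrite !inE hz; apply/imsetP; exists z.
have c2 : #|(h @: T) :\ h y0| < #|h @: T|.
  rewrite (cardsD1 (h y0) (h @: T)).
  have -> : h y0 \in h @: T by apply/imsetP; exists y0.
  by [].
apply: leq_ltn_trans (subset_leq_card s1) _.
apply: leq_ltn_trans (card_img_le (D := mem D') (f := f) (h := h) _) _.
  by move=> x y _ _; apply: H.
by apply: leq_ltn_trans (subset_leq_card s2) c2.
Qed.

End Gen.

Section G2.
Variable T : finType.
Implicit Types (S : {set {set T}}) (x y u v z w : T).

Definition cl S x := [set y | connect (srel S) x y].

Lemma srel_sym S : symmetric (srel S).
Proof. by move=> x y; rewrite /srel setUC. Qed.

Lemma csym S : connect_sym (srel S).
Proof. exact: sym_connect_sym (@srel_sym S). Qed.

Lemma cl_eq S x y : (cl S x == cl S y) = connect (srel S) x y.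
Proof.
apply/eqP/idP => [E|c].
  have : y \in cl S y by rewrite inE connect0.
  by rewrite -E inE.
apply/setP=> z; rewrite !inE; apply/idP/idP => h.
  by apply: connect_trans h; rewrite csym.
exact: connect_trans c h.
Qed.

Lemma clP S x y : cl S x = cl S y <-> connect (srel S) x y.
Proof. by rewrite -cl_eq; split => [->|/eqP]. Qed.

Lemma set2_cases z w u v : [set z; w] = [set u; v] ->
  (z = u /\ w = v) \/ (z = v /\ w = u).
Proof.
move=> E.
have zi : z \in [set u; v] by rewrite -E set21.
have wi : w \in [set u; v] by rewrite -E set22.
have ui : u \in [set z; w] by rewrite E set21.
have vi : v \in [set z; w] by rewrite E set22.
case/set2P: zi => zi; case/set2P: wi => wi; case/set2P: ui => ui;
  case/set2P: vi => vi; subst; auto.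
Qed.

Lemma contract_V_E S : contract_V S = cl S @: T.
Proof. by []. Qed.

Lemma step_split S u v y z : srel S y z ->
  srel (S :\ [set u; v]) y z \/ ((y = u /\ z = v) \/ (y = v /\ z = u)).
Proof.
rewrite /srel => yz; case: (eqVneq [set y; z] [set u; v]) => E.
  by right; apply: set2_cases.
by left; rewrite !inE E.
Qed.

Lemma sub_srel S S' : S' \subset S -> forall x y, srel S' x y -> srel S x y.
Proof. by move=> /subsetP H x y; apply: H. Qed.

Lemma connect_mono S S' x y : S' \subset S ->
  connect (srel S') x y -> connect (srel S) x y.
Proof. move=> H; apply: connect_sub => a b /(sub_srel H); exact: connect1. Qed.

Lemma V_lower S S' : S' \subset S -> #|cl S @: T| <= #|cl S' @: T|.
Proof.
move=> H; apply: card_img_le => x y _ _ /clP c; apply/clP.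
exact: connect_mono H c.
Qed.

Lemma V_strict S S' x y : S' \subset S -> connect (srel S) x y ->
   ~~ connect (srel S') x y -> #|cl S @: T| < #|cl S' @: T|.
Proof.
move=> H c nc; apply: (card_img_lt (x0 := x) (y0 := y)).
- move=> a b /clP c'; apply/clP; exact: connect_mono H c'.
- by apply/clP.
- by rewrite cl_eq.
Qed.

Lemma path_lemma S u v x y : connect (srel S) x y ->
  let S' := S :\ [set u; v] in
  connect (srel S') x y \/
  ((connect (srel S') x u \/ connect (srel S') x v) /\
   (connect (srel S') y u \/ connect (srel S') y v)).
Proof.
move=> c S'.
apply: (connect_ind' (P := fun y => connect (srel S') x y \/
  ((connect (srel S') x u \/ connect (srel S') x v) /\
   (connect (srel S') y u \/ connect (srel S') y v)))) c.
  by left; apply: connect0.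
move=> a b IH /(step_split u v) [ab|[[ea eb]|[ea eb]]]; rewrite /=.
- case: IH => [c|[h1 h2]]; first by left; apply: connect_trans c (connect1 ab).
  right; split => //.
  have ba : connect (srel S') b a by rewrite csym; apply: connect1.
  by case: h2 => h2; [left|right]; apply: connect_trans ba h2.
- rewrite ea eb in IH *; case: IH => [c|[h1 h2]]; right; split; auto; by right; apply: connect0.
- rewrite ea eb in IH *; case: IH => [c|[h1 h2]]; right; split; auto; by left; apply: connect0.
Qed.

Lemma V_upper S u v : #|cl (S :\ [set u; v]) @: T| <= #|cl S @: T| + 1.
Proof.
set S' := S :\ [set u; v].
pose D := [set z | cl S' z != cl S' v].
have s1 : cl S' @: T \subset cl S' v |: (cl S' @: D).
  apply/subsetP=> c /imsetP [z _ ->]; rewrite !inE.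
  case: (eqVneq (cl S' z) (cl S' v)) => [->|ne]; first by rewrite ?eqxx.
  idtac.
  by apply/orP; right; apply/imsetP; exists z; rewrite ?inE.
have c1 : #|cl S' @: T| <= #|cl S' @: D| + 1.
  apply: leq_trans (subset_leq_card s1) _.
  by rewrite cardsU1 addnC leq_add2l leq_b1.
apply: leq_trans c1 _; rewrite leq_add2r.
apply: leq_trans (card_img_le (D := mem D) (f := cl S') (h := cl S) _) _.
  move=> a b; rewrite !inE !cl_eq => na nb /clP c; apply/clP.
  case: (path_lemma u v c) => [//|[[au|av] [bu|bv]]].
  - by apply: connect_trans au _; rewrite csym.
  - by rewrite bv in nb.
  - by rewrite av in na.
  - by rewrite av in na.
apply: subset_leq_card; apply/subsetP=> c /imsetP [z _ ->]; apply/imsetP; by exists z.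
Qed.

End G2.

Section G3.
Variable T : finType.
Implicit Types (S : {set {set T}}) (x y u v z w : T).

Lemma sum_V S : \sum_(C in cl S @: T) (#|C| - 1) = #|T| - #|cl S @: T|.
Proof.
have h1 : \sum_(C in cl S @: T) #|C| = #|T|.
  rewrite -sum1_card (partition_big_imset (cl S)).
  apply: eq_bigr => C /imsetP [z _ ->].
  rewrite sum1_card; apply: eq_card => y; by rewrite [RHS]inE inE -cl_eq eq_sym.
have h2 : \sum_(C in cl S @: T) (#|C| - 1) + #|cl S @: T| = #|T|.
  rewrite -h1 -sum1_card -big_split; apply: eq_bigr => C /imsetP [z _ ->].
  rewrite /= subnK //; apply/card_gt0P; exists z; by rewrite inE connect0.
by rewrite -h2 addnK.
Qed.

Definition pairs S := forall a, a \in S -> exists u v, a = [set u; v].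

Lemma lemA S : pairs S -> #|T| <= #|cl S @: T| + #|S|.
Proof.
move Hn : #|S| => n; elim: n S Hn => [|n IH] S Hn pS.
  move/eqP: Hn; rewrite cards_eq0 => /eqP ->; rewrite addn0.
  rewrite -(card_imset (mem T) (@set1_inj T)).
  apply: subset_leq_card; apply/subsetP=> C /imsetP [x _ ->]; apply/imsetP.
  exists x => //; apply/setP=> y; rewrite !inE; apply/eqP/idP => [->|].
    exact: connect0.
  case/connectP => [[|z p]] //= pth ->.
  by move: pth; rewrite /srel inE => /andP [].
have [a aS] : exists a, a \in S.
  by apply/set0Pn; rewrite -card_gt0 Hn.
have [u [v Ea]] := pS a aS; subst a.
have HS' : #|S :\ [set u; v]| = n by move: Hn; rewrite (cardsD1 [set u; v]) aS => [[]].
have pS' : pairs (S :\ [set u; v]) by move=> b; rewrite inE => /andP [_]; apply: pS.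
have := IH _ HS' pS'.
have := V_upper S u v.
rewrite -Hn -HS'; lia.
Qed.

Definition forest S := forall u v, [set u; v] \in S ->
  ~~ connect (srel (S :\ [set u; v])) u v.

Lemma lemB S : pairs S -> forest S -> #|S| + #|cl S @: T| <= #|T|.
Proof.
move Hn : #|S| => n; elim: n S Hn => [|n IH] S Hn pS fS.
  by rewrite add0n; apply: leq_imset_card.
have [a aS] : exists a, a \in S.
  by apply/set0Pn; rewrite -card_gt0 Hn.
have [u [v Ea]] := pS a aS; subst a.
set S' := S :\ [set u; v].
have HS' : #|S'| = n by move: Hn; rewrite (cardsD1 [set u; v]) aS => [[]].
have pS' : pairs S' by move=> b; rewrite inE => /andP [_]; apply: pS.
have fS' : forest S'.
  move=> x y; rewrite inE => /andP [_ xy]; apply/negP => c.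
  have := fS _ _ xy; rewrite (connect_mono _ c) //.
  by apply/subsetP=> b; rewrite !inE => /and3P [-> _ ->].
have := IH _ HS' pS' fS'.
have : #|cl S @: T| < #|cl S' @: T|.
  apply: (V_strict (x := u) (y := v)).
  - exact: subsetDl.
  - by apply: connect1; rewrite /srel.
  - exact: fS.
lia.
Qed.

Lemma remove_same S u v : [set u; v] \in S ->
  connect (srel (S :\ [set u; v])) u v ->
  forall x y, connect (srel (S :\ [set u; v])) x y = connect (srel S) x y.
Proof.
move=> uvS c x y; apply/idP/idP; first by apply: connect_mono; exact: subsetDl.
apply: connect_sub => a b /(step_split u v) [ab|[[-> ->]|[-> ->]]].
- exact: connect1.
- exact: c.
- by rewrite csym.
Qed.

Lemma lemC S : pairs S -> exists S1, [/\ S1 \subset S, pairs S1, forest S1 &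
  forall x y, connect (srel S1) x y = connect (srel S) x y].
Proof.
move Hn : #|S| => n; elim: n S Hn => [|n IH] S Hn pS.
  exists S; split => // u v; move/eqP: Hn; rewrite cards_eq0 => /eqP ->.
  by rewrite inE.
case: (boolP [exists u, exists v, ([set u; v] \in S) &&
                 connect (srel (S :\ [set u; v])) u v]).
  case/existsP=> u /existsP [v /andP [uvS c]].
  set S' := S :\ [set u; v].
  have HS' : #|S'| = n by move: Hn; rewrite (cardsD1 [set u; v]) uvS => [[]].
  have pS' : pairs S' by move=> b; rewrite inE => /andP [_]; apply: pS.
  have [S1 [s1 p1 f1 c1]] := IH _ HS' pS'.
  exists S1; split => //.
    by apply: subset_trans s1 _; exact: subsetDl.
  by move=> x y; rewrite c1 remove_same.
move=> nf; exists S; split => // u v uvS; apply/negP => c.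
by move/existsP: nf; apply; exists u; apply/existsP; exists v; rewrite uvS.
Qed.

End G3.

Section M.
Variable T : finType.
Variable e : rel T.
Hypothesis e_sym : symmetric e.
Hypothesis e_irr : irreflexive e.

Lemma mono_eq (phi : T -> bool) S :
  (forall x, [set y | connect (induced e (fun w => phi w == phi x)) x y] = cl S x) ->
  mono_comps e phi = cl S @: T.
Proof.
move=> H; apply/setP => C; rewrite inE; apply/orP/imsetP.
  case => /imsetP [x]; rewrite inE => /eqP px ->; exists x => //; by rewrite -H px.
case=> x _ ->; have := H x; case Ex: (phi x) => Hx; [left|right];
  apply/imsetP; exists x; rewrite ?inE ?Ex // Hx.
Qed.

Lemma cost_eq phi S :
  (forall x, [set y | connect (induced e (fun w => phi w == phi x)) x y] = cl S x) ->
  cost e phi = #|T| - #|cl S @: T|.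
Proof. by move=> H; rewrite /cost (mono_eq H) sum_V. Qed.

Lemma edge_of x y a b : [set x; y] = [set a; b] -> e a b -> e x y.
Proof.
by case/set2_cases => [[-> ->]|[-> ->]] //; rewrite e_sym.
Qed.

Lemma dirL phi k : cost e phi <= k ->
  exists S : {set {set T}},
     [/\ S \subset edges e, #|S| <= k & bipartite (contract_adj e) (contract_V S)].
Proof.
move=> Hc.
pose S0 := [set [set x; y] | x in T, y in T & e x y && (phi x == phi y)].
have inS0 x y : [set x; y] \in S0 -> e x y /\ phi x = phi y.
  case/imset2P => a b _ hb E; move: hb; rewrite !inE /= => /andP [eab /eqP pab].
  case: (set2_cases E) => [[-> ->]|[-> ->]]; split => //; by rewrite e_sym.
have pS0 : pairs S0 by move=> c /imset2P [x1 y1 h1 h2 E]; exists x1, y1.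
have [S [sS pS fS cS]] := lemC pS0.
have inv x y : connect (srel S0) x y -> phi y = phi x.
  move=> c; apply: (connect_ind' (P := fun y => phi y = phi x)) c => // a b pa.
  by rewrite /srel => /inS0 [_ <-].
have cl_comp x : [set y | connect (induced e (fun w => phi w == phi x)) x y] = cl S x.
  apply/setP=> y; rewrite !inE cS; apply/idP/idP.
    apply: connect_sub => a b /and3P [/eqP pa /eqP pb eab]; apply: connect1.
    by rewrite /srel; apply: imset2_f; rewrite ?inE //= eab pa pb eqxx.
  move=> c.
  suff [] : phi y = phi x /\ connect (induced e (fun w => phi w == phi x)) x y by [].
  apply: (connect_ind' (P := fun y => phi y = phi x /\
      connect (induced e (fun w => phi w == phi x)) x y)) c.
    by split => //; exact: connect0.
  move=> a b [pa ca] /inS0 [eab pab]; split; first by rewrite -pab.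
  by apply: connect_trans ca (connect1 _); rewrite /induced pa -pab pa eqxx eab.
exists S; split.
- apply: subset_trans sS _; apply/subsetP=> a /imset2P [x y _ hy ->]; move: hy; rewrite !inE /=.
  by case/andP=> exy _; apply: imset2_f; rewrite ?inE.
- have := lemB pS fS; have := cost_eq cl_comp; lia.
- exists (fun A : {set T} => [exists x in A, phi x]) => A B /imsetP [a _ ->] /imsetP [b _ ->].
  have fcl c : [exists x in cl S c, phi x] = phi c.
    apply/existsP/idP => [[x /andP [xi px]]|pc].
      by move: xi; rewrite inE cS => /inv <-.
    by exists c; rewrite inE connect0 pc.
  rewrite !fcl /contract_adj => /andP [ne /existsP [x /andP [xa /existsP [y /andP [yb exy]]]]].
  move: xa yb; rewrite !inE !cS => ax yb.
  rewrite -(inv _ _ ax) -(inv _ _ yb); apply/negP => /eqP pxy.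
  have cxy : connect (srel S0) x y.
    by apply: connect1; rewrite /srel; apply: imset2_f; rewrite ?inE //= exy pxy eqxx.
  move/eqP: ne; apply; apply/clP; rewrite cS.
  apply: connect_trans ax (connect_trans cxy _); rewrite csym; exact: yb.
Qed.

Lemma dirR k (S : {set {set T}}) :
  S \subset edges e -> #|S| <= k -> bipartite (contract_adj e) (contract_V S) ->
  exists phi : T -> bool, cost e phi <= k.
Proof.
move=> sE Sk [f fP].
have inE' x y : [set x; y] \in S -> e x y.
  move=> /(subsetP sE) /imset2P [a b _ hb E]; move: hb; rewrite !inE /= => eab.
  exact: edge_of E eab.
have pS : pairs S.
  by move=> c /(subsetP sE) /imset2P [x1 y1 h1 h2 E]; exists x1, y1.
pose phi x := f (cl S x).
have inV x : cl S x \in contract_V S by apply/imsetP; exists x.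
have cl_comp x : [set y | connect (induced e (fun w => phi w == phi x)) x y] = cl S x.
  apply/setP=> y; rewrite !inE; apply/idP/idP.
    apply: connect_sub => a b /and3P [/eqP pa /eqP pb eab].
    apply/negPn/negP => nab.
    have : contract_adj e (cl S a) (cl S b).
      rewrite /contract_adj cl_eq nab /=; apply/existsP; exists a.
      rewrite inE connect0 /=; apply/existsP; exists b; by rewrite inE connect0 eab.
    move/(fP _ _ (inV a) (inV b)); by rewrite -/(phi a) -/(phi b) pa pb eqxx.
  move=> c.
  suff [] : connect (srel S) x y /\ connect (induced e (fun w => phi w == phi x)) x y by [].
  apply: (connect_ind' (P := fun y => connect (srel S) x y /\
      connect (induced e (fun w => phi w == phi x)) x y)) c.
    by split; exact: connect0.
  move=> a b [ca ia] sab; split; first by apply: connect_trans ca (connect1 sab).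
  apply: connect_trans ia (connect1 _).
  have pa : phi a = phi x by rewrite /phi; congr f; apply/clP; rewrite csym.
  have pb : phi b = phi x.
    rewrite /phi; congr f; apply/clP; rewrite csym; exact: connect_trans ca (connect1 sab).
  by rewrite /induced pa pb eqxx (inE' _ _ sab).
exists phi; rewrite (cost_eq cl_comp).
have := lemA pS; lia.
Qed.

End M.

Theorem lemma1 (T : finType) (e : rel T) (e_sym : symmetric e)
  (e_irr : irreflexive e) (k : nat) :
  (exists phi : T -> bool, cost e phi <= k) <->
  (exists S : {set {set T}},
     [/\ S \subset edges e, #|S| <= k & bipartite (contract_adj e) (contract_V S)]).
Proof.
split.
  by case=> phi Hc; apply: dirL Hc.
by case=> S [sE Sk bS]; apply: dirR sE Sk bS.
Qed.
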